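(* Let $m\geq 2$ and $G=T^+_{m,1}$ with root $r$, stem $r'$, and children $r_1,\dots,r_m$ of $r$. If $S$ is a Type II set for $G$, then $N_G[r]\setminus\mathcal{P}^\infty(S)=\{r',r_i\}$ for some $i\in[m]$. Furthermore, for all $k\ge 0$, $$H^k_{m,1}=\langle\mathcal{H}^{1}\oplus\mathcal{E}^{m-1}\rangle^k_{m,0}\quad\text{and}\quad E^k_{m,1}=\langle\mathcal{H}^{0}\oplus\mathcal{E}^{m}\rangle^k_{m,0}+\sum_{\ell=0}^{m}\langle\mathcal{H}^{\ell}\oplus\mathcal{E}^{m-\ell}\rangle^{k-1}_{m,0}.$$
   Context: Power domination: for a graph $G=(V,E)$ and $S\subseteq V$, $\mathcal{P}^0(S)=N[S]$ and for $k\ge1$, $\mathcal{P}^k(S)=\mathcal{P}^{k-1}(S)\cup N^*(\mathcal{P}^{k-1}(S))$, where $x\in N^*(A)$ iff some $a\in A$ has $x$ as its only neighbor not in $A$; $\mathcal{P}^\infty(S)$ is the stable value (the set of observed vertices), and $S$ is a power dominating set if $\mathcal{P}^\infty(S)=V$. $T_{m,h}$ is the complete $m$-ary tree of height $h$ rooted at $r$; $T^+_{m,h}$ is $T_{m,h}$ plus a new vertex $r'$ (stem) joined to $r$. For $G=T^+_{m,h}$, a set $S\subseteq V(G)\setminus\{r'\}$ is Type I if it is a power dominating set for $G$; Type II if it is not but $S\cup\{r'\}$ is; Type 0 otherwise. $E^k_{m,h}$ and $H^k_{m,h}$ denote the numbers of Type I and Type II sets of size $k$ for $T^+_{m,h}$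 (zero for $k<0$). Define $$\langle\mathcal{H}^{\ell}\oplus\mathcal{E}^{m-\ell}\rangle^k_{m,h}=\sum \binom{m}{\ell}\binom{\ell}{s_0,\dots,s_k}\binom{m-\ell}{t_0,\dots,t_k}\Big(\prod_{j=1}^{\ell}H^{i_j}_{m,h}\Big)\Big(\prod_{j=\ell+1}^{m}E^{i_j}_{m,h}\Big),$$ the sum over all tuples of nonnegative integers $(i_1,\dots,i_m)$ with $i_1\le\cdots\le i_\ell$, $i_{\ell+1}\le\cdots\le i_m$, and $i_1+\cdots+i_m=k$, where $s_\alpha=|\{j\in[\ell]:i_j=\alpha\}|$ and $t_\beta=|\{j\in[\ell+1,m]:i_j=\beta\}|$ (empty sum $=0$ for $k<0$). *)

(* Defs.v *)
From mathcomp Require Import all_boot.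
Set Implicit Arguments. Unset Strict Implicit. Unset Printing Implicit Defensive.

Section PowerDom.
Variables (V : finType) (adj : rel V).

Definition nbh (x : V) : {set V} := [set y | adj x y].
Definition cnbh (S : {set V}) : {set V} := S :|: \bigcup_(x in S) nbh x.
Definition nstar (A : {set V}) : {set V} :=
  [set x | [exists a in A, (nbh a :\: A) == [set x]]].
Fixpoint pk (k : nat) (S : {set V}) : {set V} :=
  match k with
  | 0 => cnbh S
  | k'.+1 => pk k' S :|: nstar (pk k' S)
  end.
(* P^infty(S): the stable value; the chain P^0 ⊆ P^1 ⊆ ... in the finite
   set V stabilises after at most #|V| steps, so it equals the union of
   P^0, ..., P^{#|V|}. *)
Definition pinf (S : {set V}) : {set V} := \bigcup_(k < #|V|.+1) pk k S.
Definition power_dominating (S : {set V}) : bool := pinf S == [set: V].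
End PowerDom.

(* Vertices of T_{m,h}: words over 'I_m of length d <= h (root = empty word,
   children of w are the words rcons w a). *)
Definition tnode (m h : nat) := {d : 'I_h.+1 & (nat_of_ord d).-tuple 'I_m}.
(* Vertices of T^+_{m,h}: None is the stem r', Some w a tree vertex. *)
Definition tvtx (m h : nat) := option (tnode m h).

Definition word (m h : nat) (x : tnode m h) : seq 'I_m := val (tagged x).

Definition childb (m h : nat) (x y : tnode m h) : bool :=
  (size (word y) == (size (word x)).+1) && prefix (word x) (word y).

Definition tadj (m h : nat) (u v : tvtx m h) : bool :=
  match u, v with
  | None, None => false
  | None, Some y => size (word y) == 0
  | Some x, None => size (word x) == 0
  | Some x, Some y => childb x y || childb y x
  end.

Definition troot (m h : nat) : tvtx m h :=
  Some (existT (fun d : 'I_h.+1 => (nat_of_ord d).-tuple 'I_m) ord0 [tuple]).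
Definition tstem (m h : nat) : tvtx m h := None.
Definition tchild1 (m : nat) (i : 'I_m) : tvtx m 1 :=
  Some (existT (fun d : 'I_2 => (nat_of_ord d).-tuple 'I_m) ord_max [tuple i]).

Definition TpdS (m h : nat) (S : {set tvtx m h}) : bool :=
  power_dominating (@tadj m h) S.

Definition typeI (m h : nat) (S : {set tvtx m h}) : bool :=
  (tstem m h \notin S) && TpdS S.
Definition typeII (m h : nat) (S : {set tvtx m h}) : bool :=
  [&& tstem m h \notin S, ~~ TpdS S & TpdS (tstem m h |: S)].

(* E^k_{m,h}, H^k_{m,h} for k >= 0 (the value 0 for k < 0 is handled
   explicitly where needed) *)
Definition Ecount (m h k : nat) : nat :=
  #|[set S : {set tvtx m h} | typeI S & #|S| == k]|.
Definition Hcount (m h k : nat) : nat :=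
  #|[set S : {set tvtx m h} | typeII S & #|S| == k]|.

Definition multinom (n : nat) (s : seq nat) : nat :=
  n`! %/ \prod_(x <- s) x`!.

(* <H^l (+) E^{m-l}>^k_{m,h}, for k >= 0.  Tuples (i_1,...,i_m) are
   functions f : 'I_m -> 'I_(k+1) (each i_j <= k since they sum to k); the
   positions j < l correspond to [l], the positions j >= l to [l+1, m]. *)
Definition bracket (m h l k : nat) : nat :=
  \sum_(f : {ffun 'I_m -> 'I_k.+1} |
        [&& (\sum_(j < m) (f j : nat) == k)%N,
            [forall j1 : 'I_m, forall j2 : 'I_m,
               ((j1 < j2) && (j2 < l)) ==> (f j1 <= f j2)] &
            [forall j1 : 'I_m, forall j2 : 'I_m,
               ((l <= j1) && (j1 < j2)) ==> (f j1 <= f j2)]])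
    'C(m, l)
    * multinom l [seq #|[set j : 'I_m | (j < l) && (f j == a)]| | a : 'I_k.+1]
    * multinom (m - l) [seq #|[set j : 'I_m | (l <= j) && (f j == a)]| | a : 'I_k.+1]
    * (\prod_(j < m | j < l) Hcount m h (f j))
    * (\prod_(j < m | l <= j) Ecount m h (f j)).

(* Main.v *)
Require Import Defs.
From mathcomp Require Import all_boot zify.
Set Implicit Arguments. Unset Strict Implicit. Unset Printing Implicit Defensive.

Section Gen.
Variables (V : finType) (adj : rel V).

Lemma in_cnbh v S : (v \in cnbh adj S) = (v \in S) || [exists x in S, adj x v].
Proof.
rewrite /cnbh in_setU; congr (_ || _).
apply/bigcupP/existsP => [[x xS]|[x /andP[xS]]]; rewrite ?inE => h; exists x; rewrite ?inE ?xS //.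
Qed.

Lemma cnbh_sub_pk k S : cnbh adj S \subset pk adj k S.
Proof.
elim: k => [|k IH] //=; apply: subset_trans IH (subsetUl _ _).
Qed.

Lemma pk_sub_pinf k S : k <= #|V| -> pk adj k S \subset pinf adj S.
Proof.
move=> hk; rewrite /pinf.
exact: (bigcup_sup (Ordinal (hk : k < #|V|.+1))).
Qed.

Lemma cnbh_sub_pinf S : cnbh adj S \subset pinf adj S.
Proof. exact: subset_trans (cnbh_sub_pk 0 S) (pk_sub_pinf _ (leq0n _)). Qed.

Definition closedA (B : {set V}) :=
  forall a x, a \in B -> x \notin B -> adj a x ->
    exists y, [/\ adj a y, y \notin B & y != x].

Lemma pinf_closed S (A : {set V}) : cnbh adj S \subset A -> closedA A -> pinf adj S \subset A.
Proof.
move=> hS hA.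
have H : forall k, pk adj k S \subset A.
  elim=> [|k IH] //=; rewrite subUset IH /=.
  apply/subsetP => x; rewrite inE => /existsP[a /andP[aB /eqP E]].
  apply/negPn/negP => xA.
  have xn : x \in nbh adj a :\: pk adj k S by rewrite E set11.
  move: xn; rewrite !inE => /andP[_ ax].
  have [y [ay yA yx]] := hA a x (subsetP IH a aB) xA ax.
  have : y \in nbh adj a :\: pk adj k S.
    rewrite !inE ay andbT; apply: contra yA; exact: (subsetP IH).
  by rewrite E inE (negbTE yx).
rewrite /pinf; apply/bigcupsP => i _; exact: H.
Qed.

Lemma pd_of_pk1 S : (0 < #|V|) -> pk adj 1 S = setT -> power_dominating adj S.
Proof.
move=> hV h; rewrite /power_dominating eqEsubset subsetT /=.
by rewrite -h; apply: pk_sub_pinf.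
Qed.

Lemma in_pk1 v S : (v \in pk adj 1 S) = (v \in cnbh adj S) || (v \in nstar adj (cnbh adj S)).
Proof. by rewrite /= in_setU. Qed.

Lemma in_nstar x A : (x \in nstar adj A) = [exists a in A, nbh adj a :\: A == [set x]].
Proof. by rewrite inE. Qed.

End Gen.

Lemma pd_of_cnbh (V : finType) (adj : rel V) S : cnbh adj S = setT -> power_dominating adj S.
Proof.
move=> h; rewrite /power_dominating eqEsubset subsetT /= -h; exact: cnbh_sub_pinf.
Qed.

Section T1.
Variable m : nat.
Local Notation V := (tvtx m 1).
Local Notation st := (tstem m 1).
Local Notation rt := (troot m 1).
Local Notation ch := (@tchild1 m).

Lemma vcases (v : V) : [\/ v = st, v = rt | exists i, v = ch i].
Proof.
case: v => [[[[|[|n]] hn] t]|]; last by constructor 1.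
- constructor 2; rewrite (tuple0 t) /troot; congr Some.
  by rewrite (eq_irrelevance hn (ltn0Sn 1)).
- constructor 3; exists (thead t); rewrite /tchild1; congr Some.
  rewrite (eq_irrelevance hn (ltnSn 1)); congr existT.
  by apply: val_inj; case: t => [[|a [|b s]] //= _].
- by [].
Qed.

Lemma ch_inj : injective ch.
Proof. by move=> i j /(congr1 (fun v : V => if v is Some x then word x else [::])) [] . Qed.

Lemma st_rt : st != rt. Proof. by []. Qed.
Lemma st_ch i : st != ch i. Proof. by []. Qed.
Lemma rt_ch i : rt != ch i. Proof. by []. Qed.
Lemma ch_eq i j : (ch i == ch j) = (i == j).
Proof. by apply/eqP/eqP => [/ch_inj|->]. Qed.

Lemma adj_st v : tadj st v = (v == rt).
Proof. by case: (vcases v) => [->|->|[i ->]]; rewrite ?eqxx ?(negbTE (st_rt)) ?(eq_sym _ rt) ?(negbTE (rt_ch _)) ?(eq_sym _ st) ?(negbTE (st_rt)). Qed.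
Lemma adj_rt v : tadj rt v = (v != rt).
Proof. by case: (vcases v) => [->|->|[i ->]]; rewrite ?eqxx ?(negbTE (st_rt)) ?(eq_sym _ rt) ?(negbTE (rt_ch _)) ?(eq_sym _ st) ?(negbTE (st_rt)). Qed.
Lemma adj_ch i v : tadj (ch i) v = (v == rt).
Proof. by case: (vcases v) => [->|->|[j ->]]; rewrite ?eqxx ?(eq_sym _ rt) ?(negbTE (rt_ch _)) ?(negbTE (st_rt)). Qed.

End T1.
Arguments st_rt {m}.
Arguments st_ch {m}.
Arguments rt_ch {m}.

Section T1b.
Variable m : nat.
Local Notation V := (tvtx m 1).
Local Notation st := (tstem m 1).
Local Notation rt := (troot m 1).
Local Notation ch := (@tchild1 m).
Local Notation cn := (cnbh (@tadj m 1)).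
Local Notation PD := (power_dominating (@tadj m 1)).
Implicit Types (S A : {set V}) (v w x : V).

Lemma cardV_gt0 : 0 < #|{: V}|.
Proof. by apply/card_gt0P; exists st. Qed.

Lemma one_missing S x : (forall v, v != x -> v \in cn S) -> x != rt -> PD S.
Proof.
move=> H xr; apply: (pd_of_pk1 cardV_gt0); apply/setP => v; rewrite [RHS]inE in_pk1.
case: (eqVneq v x) => [->|vx]; last by rewrite H.
have [//|xc] := boolP (x \in cn S).
rewrite orFb in_nstar; apply/existsP; exists rt; rewrite H ?(eq_sym rt) //=.
apply/eqP/setP => w; rewrite in_setD in_set1 /nbh in_set adj_rt.
case: (eqVneq w x) => [->|wx]; first by rewrite xc xr.
by rewrite H // andbF (negbTE wx).
Qed.

Lemma notPD S (A : {set V}) x : pinf (@tadj m 1) S \subset A -> x \notin A -> ~~ PD S.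
Proof.
move=> h xA; apply: contra xA => /eqP E.
by apply: (subsetP h); rewrite E inE.
Qed.

Lemma rt_PD S : rt \in S -> PD S.
Proof.
move=> rS; apply: (@one_missing _ st) => // v _.
rewrite in_cnbh; have [//|vr] := boolP (v \in S).
by apply/existsP; exists rt; rewrite rS adj_rt; apply: contra vr => /eqP ->.
Qed.

Lemma all_PD S (i0 : 'I_m) : (forall i, ch i \in S) -> PD S.
Proof.
move=> hS; apply: (@one_missing _ st) => // v vst.
rewrite in_cnbh; have [//|vS] := boolP (v \in S).
case: (vcases v) vst vS => [->|->|[i ->]]; rewrite ?eqxx ?hS // => _ _.
by apply/existsP; exists (ch i0); rewrite hS adj_ch eqxx.
Qed.

End T1b.

Section T1c.
Variable m : nat.
Local Notation V := (tvtx m 1).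
Local Notation st := (tstem m 1).
Local Notation rt := (troot m 1).
Local Notation ch := (@tchild1 m).
Local Notation cn := (cnbh (@tadj m 1)).
Local Notation PD := (power_dominating (@tadj m 1)).
Implicit Types (S A : {set V}) (v w x : V).

Lemma one_out S i j : st \notin S -> rt \notin S -> ch i \notin S -> j != i ->
  (forall k, k != i -> ch k \in S) ->
  [/\ pinf (@tadj m 1) S = rt |: S, ~~ PD S & PD (st |: S)].
Proof.
move=> stS rS iS ji hS.
have rcn : rt \in cn S.
  by rewrite in_cnbh; apply/orP; right; apply/existsP; exists (ch j); rewrite hS // adj_ch eqxx.
have cnA : cn S \subset rt |: S.
  apply/subsetP => v; rewrite in_cnbh => /orP[vS|/existsP[x /andP[xS axv]]].
    by rewrite in_setU1 vS orbT.
  case: (vcases x) xS axv => [->|->|[k ->]] xS; first by rewrite (negbTE stS) in xS.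
    by rewrite (negbTE rS) in xS.
  by rewrite adj_ch => /eqP ->; rewrite setU11.
have clA : closedA (@tadj m 1) (rt |: S).
  move=> a x aA xA ax.
  case: (vcases a) aA ax => [->|->|[k ->]] aA.
  - by rewrite in_setU1 (negbTE st_rt) (negbTE stS) in aA.
  - case: (vcases x) xA => [->|->|[k ->]] xA _.
    + by exists (ch i); rewrite adj_rt eq_sym rt_ch in_setU1 (negbTE iS) eq_sym (rt_ch i).
    + by rewrite setU11 in xA.
    + have ki : k = i.
        apply/eqP; apply: contraR xA => ki; by rewrite in_setU1 hS ?orbT.
      subst k; exists st; rewrite adj_rt st_rt in_setU1 (negbTE st_rt) (negbTE stS).
      by [].
  - by rewrite adj_ch => /eqP E; rewrite E setU11 in xA.
have Pe : pinf (@tadj m 1) S = rt |: S.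
  apply/eqP; rewrite eqEsubset pinf_closed //=.
  apply: subset_trans (cnbh_sub_pinf _ _); rewrite subUset sub1set rcn /=.
  exact: subsetUl.
split=> //.
  by apply: (@notPD _ _ (rt |: S) st); rewrite ?Pe // in_setU1 (negbTE st_rt) (negbTE stS).
apply: (@one_missing _ _ (ch i)); last by rewrite eq_sym rt_ch.
move=> v vi; rewrite in_cnbh.
case: (vcases v) vi => [->|->|[k ->]] vi; first by rewrite setU11.
  by apply/orP; right; apply/existsP; exists st; rewrite setU11 adj_st eqxx.
by rewrite in_setU1 hS ?orbT //; apply: contra vi => /eqP ->.
Qed.

Lemma two_out S i j : st \notin S -> rt \notin S -> ch i \notin S -> ch j \notin S ->
  i != j -> ~~ PD S /\ ~~ PD (st |: S).
Proof.
move=> stS rS iS jS ij.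
set A := st |: (rt |: S).
have cnA : forall X : {set V}, X \subset st |: S -> cn X \subset A.
  move=> X XS; apply/subsetP => v; rewrite in_cnbh => /orP[vS|/existsP[x /andP[xS axv]]].
    have := subsetP XS v vS; rewrite !in_setU1 => /orP[->//|->]; by rewrite !orbT.
  have := subsetP XS x xS.
  case: (vcases x) axv => [->|->|[k ->]].
  - by rewrite adj_st => /eqP -> _; rewrite !in_setU1 eqxx orbT.
  - by move=> _; rewrite in_setU1 eq_sym (negbTE st_rt) (negbTE rS).
  - by rewrite adj_ch => /eqP -> _; rewrite !in_setU1 eqxx orbT.
have clA : closedA (@tadj m 1) A.
  move=> a x aA xA ax.
  case: (vcases a) aA ax => [->|->|[k ->]] aA.
  - by rewrite adj_st => /eqP E; rewrite E !in_setU1 eqxx orbT in xA.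
  - case: (vcases x) xA => [->|->|[k ->]] xA _.
    + by rewrite setU11 in xA.
    + by rewrite !in_setU1 eqxx orbT in xA.
    + case: (eqVneq k i) => [->|ki].
        exists (ch j); rewrite adj_rt eq_sym rt_ch ch_eq eq_sym ij !in_setU1 (negbTE jS).
        by rewrite eq_sym (negbTE (st_ch j)) eq_sym (negbTE (rt_ch j)).
      exists (ch i); rewrite adj_rt eq_sym rt_ch ch_eq eq_sym ki !in_setU1 (negbTE iS).
      by rewrite eq_sym (negbTE (st_ch i)) eq_sym (negbTE (rt_ch i)).
  - by rewrite adj_ch => /eqP E; rewrite E !in_setU1 eqxx orbT in xA.
have iA : ch i \notin A.
  by rewrite !in_setU1 (negbTE iS) eq_sym (negbTE (st_ch i)) eq_sym (negbTE (rt_ch i)).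
split; apply: (@notPD _ _ A (ch i)) => //; apply: pinf_closed => //; apply: cnA => //.
exact: subsetUr.
Qed.

End T1c.

Section T2.
Variable m : nat.
Hypothesis hm : 1 < m.
Local Notation V := (tvtx m 1).
Local Notation st := (tstem m 1).
Local Notation rt := (troot m 1).
Local Notation ch := (@tchild1 m).
Local Notation cn := (cnbh (@tadj m 1)).
Local Notation PD := (power_dominating (@tadj m 1)).
Implicit Types (S A : {set V}) (v w x : V) (T : {set 'I_m}).

Definition chs T : {set V} := ch @: T.

Lemma st_chs T : st \notin chs T.
Proof. by apply/imsetP => -[i _ E]; move: (st_ch i); rewrite E eqxx. Qed.
Lemma rt_chs T : rt \notin chs T.
Proof. by apply/imsetP => -[i _ E]; move: (rt_ch i); rewrite E eqxx. Qed.
Lemma ch_chs k T : (ch k \in chs T) = (k \in T).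
Proof. exact: mem_imset _ _ (@ch_inj m). Qed.
Lemma card_chs T : #|chs T| = #|T|.
Proof. exact: card_imset _ (@ch_inj m). Qed.
Lemma card_rtchs T : #|rt |: chs T| = #|T|.+1.
Proof. by rewrite cardsU1 rt_chs card_chs. Qed.

Lemma decomp S : st \notin S ->
  S = (if rt \in S then rt |: chs (ch @^-1: S) else chs (ch @^-1: S)).
Proof.
move=> stS; apply/setP => v.
case: (vcases v) => [->|->|[k ->]].
- by rewrite (negbTE stS); case: ifP => _; rewrite ?in_setU1 ?(negbTE st_rt) (negbTE (st_chs _)).
- by case: ifP => rS; rewrite ?setU11 ?rS ?(negbTE (rt_chs _)).
- by case: ifP => _; rewrite ?in_setU1 ?(eq_sym (ch k)) ?(negbTE (rt_ch k)) ch_chs inE.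
Qed.

Lemma other i : exists j : 'I_m, j != i.
Proof.
case: (eqVneq (val i) 0) => h.
  by exists (Ordinal hm); apply/eqP => E; rewrite -E in h.
by exists (Ordinal (ltnW hm)); apply/eqP => E; rewrite -E in h.
Qed.

Lemma typeII_iff S : typeII S = [exists i, S == chs (~: [set i])].
Proof.
apply/idP/idP.
  case/and3P => stS nPD PD2.
  have rS : rt \notin S by apply: contra nPD; exact: (@rt_PD m S).
  case: (pickP (fun i => ch i \notin S)) => [i /= iS|H]; last first.
    by case/negP: nPD; apply: (all_PD (Ordinal (ltnW hm))) => k; move: (H k) => /= /negbFE.
  have hk : forall k, k != i -> ch k \in S.
    move=> k ki; apply/negPn/negP => kS.
    by have [_ /negP] := two_out stS rS kS iS ki.
  apply/existsP; exists i; rewrite {1}(decomp stS) (negbTE rS).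
  apply/eqP; congr chs; apply/setP => k; rewrite !inE.
  by case: (eqVneq k i) => [->|ki]; [rewrite (negbTE iS) | rewrite hk].
case/existsP => i /eqP ->.
have [j ji] := other i.
have iS : ch i \notin chs (~: [set i]) by rewrite ch_chs !inE eqxx.
have hk : forall k, k != i -> ch k \in chs (~: [set i]).
  by move=> k ki; rewrite ch_chs !inE ki.
have [_ h1 h2] := one_out (st_chs _) (rt_chs _) iS ji hk.
by rewrite /typeII /TpdS st_chs h1 h2.
Qed.

Lemma typeI_iff S : typeI S = (st \notin S) && ((rt \in S) || (S == chs setT)).
Proof.
rewrite /typeI /TpdS; case: (boolP (st \in S)) => //= stS.
apply/idP/idP.
  move=> pd; case: (boolP (rt \in S)) => //= rS.
  case: (pickP (fun i => ch i \notin S)) => [i /= iS|H]; last first.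
    rewrite {1}(decomp stS) (negbTE rS); apply/eqP; congr chs; apply/setP => k.
    by rewrite !inE; move: (H k) => /= /negbFE.
  case: (pickP (fun k => (k != i) && (ch k \notin S))) => [k /andP[ki kS]|H].
    by have [/negP] := two_out stS rS kS iS ki.
  have [j ji] := other i.
  have hk : forall k, k != i -> ch k \in S.
    by move=> k ki; move: (H k) => /=; rewrite ki /= => /negbFE.
  by have [_ /negP] := one_out stS rS iS ji hk.
case/orP => [rS|/eqP ->]; first exact: rt_PD.
by apply: (all_PD (Ordinal (ltnW hm))) => k; rewrite ch_chs inE.
Qed.


Lemma chsC1_inj : injective (fun i : 'I_m => chs (~: [set i])).
Proof.
move=> i j /(imset_inj (@ch_inj m)) /setC_inj /set1_inj //.
Qed.

Lemma card_chsC1 i : #|chs (~: [set i])| = m.-1.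
Proof. by rewrite card_chs cardsC1 card_ord. Qed.

Lemma Hcount1 k : Hcount m 1 k = if k == m.-1 then m else 0.
Proof.
rewrite /Hcount; case: (eqVneq k m.-1) => [->|km].
  have -> : [set S | typeII S & #|S| == m.-1] = [set chs (~: [set i]) | i : 'I_m].
    apply/setP => S; rewrite inE typeII_iff.
    apply/andP/imsetP => [[/existsP[i /eqP ->] _]|[i _ ->]]; first by exists i.
    by split; [apply/existsP; exists i | rewrite card_chsC1].
  by rewrite card_imset ?card_ord //; exact: chsC1_inj.
apply/eqP; rewrite cards_eq0; apply/eqP/setP => S; rewrite !inE typeII_iff.
apply/negP => /andP[/existsP[i /eqP ->]]; rewrite card_chsC1 => /eqP E.
by rewrite E eqxx in km.
Qed.

Lemma rtchs_inj : injective (fun T => rt |: chs T).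
Proof.
move=> T1 T2 /= E; apply: (imset_inj (@ch_inj m)).
have := congr1 (fun A => A :\ rt) E; rewrite /= !setU1K //; exact: rt_chs.
Qed.

Lemma Ecount1 k : Ecount m 1 k = (if k is k'.+1 then 'C(m, k') else 0) + (k == m).
Proof.
rewrite /Ecount.
set A1 := [set rt |: chs T | T in [set T : {set 'I_m} | #|T|.+1 == k]].
set A2 := [set S | (S == chs setT) && (k == m)].
have -> : [set S | typeI S & #|S| == k] = A1 :|: A2.
  apply/setP => S; rewrite !inE typeI_iff.
  apply/idP/idP.
    case/andP => /andP[stS /orP[rS|/eqP E]] /eqP kS.
      apply/orP; left; apply/imsetP; exists (ch @^-1: S).
        by rewrite inE -card_rtchs -kS {2}(decomp stS) rS.
      by rewrite {1}(decomp stS) rS.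
    by apply/orP; right; rewrite E eqxx -kS E card_chs cardsT card_ord eqxx.
  case/orP => [/imsetP[T]|/andP[/eqP -> /eqP km]].
    rewrite inE => /eqP kT ->; rewrite in_setU1 (negbTE st_rt) st_chs setU11.
    by rewrite card_rtchs kT eqxx.
  by rewrite st_chs eqxx card_chs cardsT card_ord km eqxx orbT.
rewrite cardsU.
have -> : A1 :&: A2 = set0.
  apply/setP => S; rewrite !inE; apply/negP => /andP[/imsetP[T _ ->] /andP[/eqP E _]].
  by move: (rt_chs setT); rewrite -E setU11.
rewrite cards0 subn0 card_imset; last exact: rtchs_inj.
congr (_ + _).
  case: k {A1 A2} => [|k].
    by apply/eqP; rewrite cards_eq0; apply/eqP/setP => T; rewrite !inE.
  have -> : [set T : {set 'I_m} | #|T|.+1 == k.+1] = [set T : {set 'I_m} | #|T| == k].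
    by apply/setP => T; rewrite !inE eqSS.
  by rewrite card_draws card_ord.
rewrite /A2; case: (eqVneq k m) => _ /=.
  rewrite (_ : [set S | _ & _] = [set chs setT]) ?cards1 //; by apply/setP => S; rewrite !inE andbT.
by rewrite (_ : [set S | _ & _] = set0) ?cards0 //; apply/setP => S; rewrite !inE andbF.
Qed.

Lemma claim1 S : typeII S -> exists i, cn [set rt] :\: pinf (@tadj m 1) S = [set st; ch i].
Proof.
rewrite typeII_iff => /existsP[i /eqP ->]; exists i.
have [j ji] := other i.
have iS : ch i \notin chs (~: [set i]) by rewrite ch_chs !inE eqxx.
have hk : forall k, k != i -> ch k \in chs (~: [set i]).
  by move=> k ki; rewrite ch_chs !inE ki.
have [-> _ _] := one_out (st_chs _) (rt_chs _) iS ji hk.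
apply/setP => v; rewrite in_setD in_cnbh in_set1 !in_setU1 in_set1.
case: (vcases v) => [->|->|[k ->]].
- rewrite (negbTE st_rt) (negbTE (st_chs _)) eqxx /=.
  by apply/existsP; exists rt; rewrite in_set1 eqxx adj_rt st_rt.
- by rewrite eqxx eq_sym (negbTE st_rt) (negbTE (rt_ch i)).
  rewrite eq_sym (negbTE (rt_ch k)) ch_chs !inE [ch k == st]eq_sym (negbTE (st_ch k)) ch_eq /=.
  case: (k == i) => //=; apply/existsP; exists rt.
  by rewrite in_set1 eqxx adj_rt eq_sym rt_ch.
Qed.

End T2.

Section T0.
Variable m : nat.
Local Notation V := (tvtx m 0).
Local Notation st := (tstem m 0).
Local Notation rt := (troot m 0).
Implicit Types (S : {set V}) (v : V).

Lemma vcases0 v : v = st \/ v = rt.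
Proof.
case: v => [[[[|n] hn] t]|]; last by left.
  right; rewrite (tuple0 t) /troot; congr Some.
  by rewrite (eq_irrelevance hn (ltn0Sn 0)).
by [].
Qed.

Lemma st_rt0 : st != rt. Proof. by []. Qed.

Lemma cn_all S : (st \in S) || (rt \in S) -> cnbh (@tadj m 0) S = setT.
Proof.
move=> h; apply/setP => v; rewrite [RHS]inE in_cnbh.
case/orP: h => h; case: (vcases0 v) => ->; rewrite ?h //; apply/orP; right;
  apply/existsP; [exists st | exists rt]; rewrite h //.
Qed.

Lemma notpd0 : ~~ power_dominating (@tadj m 0) set0.
Proof.
have h : pinf (@tadj m 0) set0 \subset set0.
  apply: pinf_closed; last by move=> a x; rewrite inE.
  by apply/subsetP => v; rewrite in_cnbh inE /=; case/existsP => x; rewrite inE.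
apply/negP => /eqP E; move: h; rewrite E => /subsetP /(_ st); rewrite !inE.
by move=> /(_ isT).
Qed.

Lemma sub_cases S : st \notin S -> S = set0 \/ S = [set rt].
Proof.
move=> stS; case: (boolP (rt \in S)) => rS; [right|left]; apply/setP => v;
  case: (vcases0 v) => ->; rewrite ?inE ?(negbTE stS) ?eqxx //.
exact: negbTE.
Qed.

Lemma typeII0 S : typeII S = (S == set0).
Proof.
rewrite /typeII /TpdS; case: (boolP (st \in S)) => stS /=.
  by apply/esym/negP => /eqP E; rewrite E inE in stS.
case: (sub_cases stS) => ->.
  by rewrite notpd0 pd_of_cnbh ?eqxx // cn_all // setU11.
rewrite pd_of_cnbh ?cn_all ?inE ?eqxx ?orbT //=.
by apply/esym/negP => /eqP /setP /(_ rt); rewrite !inE eqxx.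
Qed.

Lemma typeI0 S : typeI S = (S == [set rt]).
Proof.
rewrite /typeI /TpdS; case: (boolP (st \in S)) => stS /=.
  by apply/esym/negP => /eqP E; rewrite E inE in stS.
case: (sub_cases stS) => ->.
  rewrite (negbTE notpd0); apply/esym/negP => /eqP /setP /(_ rt); rewrite !inE eqxx //.
by rewrite pd_of_cnbh ?cn_all ?inE ?eqxx ?orbT.
Qed.

Lemma Hcount0 k : Hcount m 0 k = (k == 0).
Proof.
rewrite /Hcount; case: (eqVneq k 0) => [->|k0].
  rewrite (_ : [set S | _ & _] = [set set0]) ?cards1 //.
  apply/setP => S; rewrite !inE typeII0 cards_eq0; by case: (S == set0).
rewrite (_ : [set S | _ & _] = set0) ?cards0 //.
apply/setP => S; rewrite !inE typeII0; apply/negP => /andP[/eqP -> ].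
by rewrite cards0 eq_sym (negbTE k0).
Qed.

Lemma Ecount0 k : Ecount m 0 k = (k == 1).
Proof.
rewrite /Ecount; case: (eqVneq k 1) => [->|k0].
  rewrite (_ : [set S | _ & _] = [set [set rt]]) ?cards1 //.
  apply/setP => S; rewrite !inE typeI0.
  by case: (eqVneq S [set rt]) => [->|] //=; rewrite cards1.
rewrite (_ : [set S | _ & _] = set0) ?cards0 //.
apply/setP => S; rewrite !inE typeI0; apply/negP => /andP[/eqP -> ].
by rewrite cards1 eq_sym (negbTE k0).
Qed.

End T0.

Lemma sum_ge n l : \sum_(j < n) ((l <= j) : nat) = n - l.
Proof.
elim: n => [|n IH]; first by rewrite big_ord0.
rewrite big_ord_recr /= IH; lia.
Qed.

Lemma sum_lt n l : \sum_(j < n) ((j < l) : nat) = minn l n.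
Proof.
elim: n => [|n IH]; first by rewrite big_ord0 minn0.
rewrite big_ord_recr /= IH; lia.
Qed.

Lemma card_pred_sum n (P : pred 'I_n) : #|[set j | P j]| = \sum_(j < n) (P j : nat).
Proof.
rewrite cardsE -sum1_card big_mkcond /=; apply: eq_bigr => j _.
by rewrite unfold_in; case: (P j).
Qed.

Lemma prod_fact1 n (g : 'I_n -> nat) a0 : (forall a, a != a0 -> g a = 0) ->
  \prod_(a < n) (g a)`! = (g a0)`!.
Proof.
move=> h; rewrite (bigD1 a0) //= big1 ?muln1 // => a ha; by rewrite h.
Qed.

Lemma multinom1 n K (g : 'I_K -> nat) :
  \prod_(a < K) (g a)`! = n`! -> multinom n [seq g a | a : 'I_K] = 1.
Proof.
move=> h; rewrite /multinom big_image /= h divnn fact_gt0 //.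
Qed.

Definition bpred (m l k : nat) (f : {ffun 'I_m -> 'I_k.+1}) : bool :=
  [&& (\sum_(j < m) (f j : nat) == k)%N,
            [forall j1 : 'I_m, forall j2 : 'I_m,
               ((j1 < j2) && (j2 < l)) ==> (f j1 <= f j2)] &
            [forall j1 : 'I_m, forall j2 : 'I_m,
               ((l <= j1) && (j1 < j2)) ==> (f j1 <= f j2)]].
Definition bterm (m h l k : nat) (f : {ffun 'I_m -> 'I_k.+1}) : nat :=
    'C(m, l)
    * multinom l [seq #|[set j : 'I_m | (j < l) && (f j == a)]| | a : 'I_k.+1]
    * multinom (m - l) [seq #|[set j : 'I_m | (l <= j) && (f j == a)]| | a : 'I_k.+1]
    * (\prod_(j < m | j < l) Hcount m h (f j))
    * (\prod_(j < m | l <= j) Ecount m h (f j)).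
Lemma bracketE m h l k : bracket m h l k = \sum_(f | @bpred m l k f) @bterm m h l k f.
Proof. by []. Qed.

Lemma bracket0 m l k : l <= m ->
  bracket m 0 l k = if k == m - l then 'C(m, l) else 0.
Proof.
move=> lm; rewrite bracketE.
pose term := @bterm m 0 l k.
have Z : forall f : {ffun 'I_m -> 'I_k.+1},
    (exists j : 'I_m, (f j : nat) != (l <= j)) -> term f = 0.
  move=> f [j hj]; rewrite /term /bterm; case: (ltnP j l) => jl.
    rewrite [X in _ * X * _](bigD1 j) //= Hcount0.
    by move: hj; rewrite leqNgt jl /= => /negbTE ->; rewrite mul0n muln0 mul0n.
  rewrite [X in _ * X](bigD1 j) //= Ecount0.
  by move: hj; rewrite jl /= => /negbTE ->; rewrite mul0n muln0.
have V : forall f : {ffun 'I_m -> 'I_k.+1}, term f != 0 -> forall j : 'I_m, (f j : nat) = (l <= j).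
  move=> f tf j; apply/eqP; apply: contraR tf => hj; apply/eqP; apply: Z; by exists j.
case: (eqVneq k (m - l)) => [ek|nk]; last first.
  apply: big1 => f /and3P[/eqP hs _ _]; apply/eqP/negPn/negP => tf.
  move: hs; rewrite (eq_bigr (fun j : 'I_m => ((l <= j) : nat))) ?sum_ge => [E|j _].
    by rewrite E eqxx in nk.
  exact: V.
pose F0 : {ffun 'I_m -> 'I_k.+1} := [ffun j : 'I_m => inord (l <= j)].
have F0v : forall j : 'I_m, (F0 j : nat) = (l <= j).
  move=> j; rewrite ffunE inordK //; case: (leqP l j) => //= lj.
  rewrite ek; have := ltn_ord j; lia.
have mono : forall j1 j2 : 'I_m, j1 < j2 -> F0 j1 <= F0 j2.
  move=> j1 j2 h; rewrite !F0v; case: (leqP l j1) => //= h1.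
  by rewrite (leq_trans h1 (ltnW h)).
rewrite (bigD1 F0); last first.
  apply/and3P; split.
  - by rewrite (eq_bigr (fun j : 'I_m => ((l <= j) : nat))) ?sum_ge ?ek // => j _; rewrite F0v.
  - by apply/forallP => j1; apply/forallP => j2; apply/implyP => /andP[h _]; apply: mono.
  - by apply/forallP => j1; apply/forallP => j2; apply/implyP => /andP[_ h]; apply: mono.
rewrite big1 ?addn0 => [|f /andP[_ nf]]; last first.
  apply/eqP/negPn/negP => tf; move/negP: nf; apply; apply/eqP/ffunP => j.
  by apply: val_inj; rewrite /= F0v (V f tf).
rewrite /bterm.
rewrite big1 ?muln1 => [|j /= jl]; last by rewrite Hcount0 F0v leqNgt jl.
rewrite big1 ?muln1 => [|j /= jl]; last by rewrite Ecount0 F0v jl.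
rewrite !multinom1 ?muln1; first exact: addn0.
  rewrite (@prod_fact1 _ _ (inord 1)) => [|a ha].
    congr _`!; rewrite card_pred_sum -sum_ge; apply: eq_bigr => j _.
    case: (leqP l j) => lj //=.
    by rewrite ffunE lj eqxx.
  rewrite card_pred_sum big1 // => j _; case: (leqP l j) => lj //=.
  by rewrite ffunE lj eq_sym (negbTE ha).
rewrite (@prod_fact1 _ _ (inord 0)) => [|a ha].
  congr _`!; rewrite card_pred_sum.
  rewrite (eq_bigr (fun j : 'I_m => ((j < l) : nat))) ?sum_lt; first by lia.
  move=> j _; case: (ltnP j l) => lj //=.
  by rewrite ffunE leqNgt lj eqxx.
rewrite card_pred_sum big1 // => j _; case: (ltnP j l) => lj //=.
by rewrite ffunE leqNgt lj /= eq_sym (negbTE ha).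
Qed.

Lemma sumC m k' : \sum_(l < m.+1) bracket m 0 l k' = 'C(m, k').
Proof.
rewrite (eq_bigr (fun l : 'I_m.+1 => if k' == m - l then 'C(m, l) else 0)) => [|l _]; last first.
  by rewrite bracket0 // -ltnS.
case: (leqP k' m) => hk.
  have hi : m - k' < m.+1 by rewrite ltnS leq_subr.
  rewrite (bigD1 (Ordinal hi)) //= subKn // eqxx big1 ?addn0 ?bin_sub // => l hl.
  case: ifP => // /eqP E; move: hl; rewrite -val_eqE /= E subKn //; last by rewrite -ltnS.
  by rewrite eqxx.
rewrite big1 ?bin_small // => l _; case: ifP => // /eqP E.
have := leq_subr l m; rewrite -E => h; move: (leq_ltn_trans h hk); by rewrite ltnn.
Qed.

Theorem mainTheorem5 (m : nat) (hm : 2 <= m) :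
  (forall S : {set tvtx m 1}, typeII S ->
     exists i : 'I_m,
       cnbh (@tadj m 1) [set troot m 1] :\: pinf (@tadj m 1) S
       = [set tstem m 1; tchild1 i]) /\
  (forall k : nat,
     Hcount m 1 k = bracket m 0 1 k /\
     Ecount m 1 k = bracket m 0 0 k
                    + (if k is k'.+1 then \sum_(l < m.+1) bracket m 0 l k' else 0)).
Proof.
split; first exact: claim1.
move=> k; split.
  by rewrite (Hcount1 hm) bracket0 ?bin1 ?subn1 // ltnW.
rewrite (Ecount1 hm) bracket0 // subn0 bin0.
case: k => [|k]; last by rewrite sumC addnC; case: eqP.
by case: eqP.
Qed.
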